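(* Let $t=\lceil\frac{n-\kappa}{2}\rceil$ and $\mathrm{Small}(x)=\mathrm{Small}_t(x)$. Suppose $\mathrm{Small}(u)$ and $\mathrm{Small}(v)$ both exist and $u\in\mathrm{Side}_{\mathrm{Small}(v)}(v)$, and suppose $W$ is a $\kappa$-cut with $u\notin W$ and $\kappa\le|\mathrm{Side}_{\mathrm{Small}(v)}(v)|<|\mathrm{Side}_W(u)|\le t$. Then $v\in W\cup\mathrm{Side}_W(u)$.
   Context: $G=(V,E)$ is a finite, simple, connected, undirected, non-complete graph with $n=|V|$; $\kappa$ is its vertex connectivity, assumed $\kappa<n/4$. A cut is a set $U\subset V$ whose removal disconnects $G$; a $\kappa$-cut is a cut of size $\kappa$; a side of $U$ is a connected component of the subgraph induced on $V\setminus U$; $\mathrm{Side}_U(x)$ is the side containing $x\notin U$. For a vertex $x$ and $t\le\lceil\frac{n-\kappa}{2}\rceil$, $\mathrm{Small}_t(x)$ denotes, when it exists, the unique $\kappa$-cut $Y$ with $x\notin Y$, $|\mathrm{Side}_Y(x)|\le t$, and $\mathrm{Side}_Y(x)\subseteq\mathrm{Side}_U(x)$ for every $\kappa$-cut $U$ with $x\notin U$ and $|\mathrm{Side}_U(x)|\le t$ (it exists iff some $\kappa$-cut $U$ with $x\notin U$ has $|\mathrm{Side}_U(x)|\le t$). *)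

(* Defs.v *)
From mathcomp Require Import all_boot.
Set Implicit Arguments. Unset Strict Implicit. Unset Printing Implicit Defensive.

Section Graph.
Variables (T : finType) (e : rel T).

Definition simple_graph : Prop := symmetric e /\ irreflexive e.
Definition connected_graph : Prop := forall x y : T, connect e x y.
Definition non_complete : Prop := exists x y : T, x != y /\ ~~ e x y.

Definition del_rel (U : {set T}) : rel T :=
  [rel x y | [&& e x y, x \notin U & y \notin U]].

Definition Side (U : {set T}) (x : T) : {set T} :=
  [set y | (y \notin U) && connect (del_rel U) x y].

Definition is_cut (U : {set T}) : Prop :=
  exists x y : T, [/\ x \notin U, y \notin U & ~~ connect (del_rel U) x y].

Definition is_connectivity (k : nat) : Prop :=
  (exists U, is_cut U /\ #|U| = k) /\ (forall U, is_cut U -> k <= #|U|).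

Definition kcut (k : nat) (U : {set T}) : Prop := is_cut U /\ #|U| = k.

Definition is_Small (k t : nat) (x : T) (Y : {set T}) : Prop :=
  [/\ kcut k Y, x \notin Y, #|Side Y x| <= t &
      forall U, kcut k U -> x \notin U -> #|Side U x| <= t ->
        Side Y x \subset Side U x].

End Graph.

(* Main.v *)
Require Import Defs.
From mathcomp Require Import all_boot.
From mathcomp Require Import zify.
Set Implicit Arguments. Unset Strict Implicit.

Definition nb (T : finType) (e : rel T) (A : {set T}) : {set T} :=
  [set y | (y \notin A) && [exists x in A, e x y]].

Lemma del_sym (T : finType) (e : rel T) (U : {set T}) :
  symmetric e -> symmetric (del_rel e U).
Proof.
move=> se x y; rewrite /del_rel /= se.
by case: (e y x); case: (x \in U); case: (y \in U).
Qed.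

Lemma side_edge (T : finType) (e : rel T) (U : {set T}) (x y z : T) :
  symmetric e -> e y z -> y \notin U -> z \notin U ->
  (y \in Side e U x) = (z \in Side e U x).
Proof.
move=> se eyz yU zU; rewrite !inE yU zU /=.
have d1 : del_rel e U y z by rewrite /del_rel /= eyz yU zU.
have d2 : del_rel e U z y by rewrite /del_rel /= se eyz yU zU.
apply/idP/idP => h.
- exact: connect_trans h (connect1 d1).
- exact: connect_trans h (connect1 d2).
Qed.

Lemma side_nb_sub (T : finType) (e : rel T) (A : {set T}) (x : T) :
  symmetric e -> x \in A -> Side e (nb e A) x \subset A.
Proof.
move=> se xA; apply/subsetP => y; rewrite inE => /andP[_ cxy].
have cs : connect_sym (del_rel e (nb e A)) by apply: sym_connect_sym; apply: del_sym.
have cl : closed (del_rel e (nb e A)) (mem A).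
  move=> a b; rewrite /del_rel /= => /andP[eab /andP[aN bN]].
  apply/idP/idP => h.
  - apply: contraR bN => bA; rewrite inE bA /=; apply/existsP; exists a; by rewrite h.
  - apply: contraR aN => aA; rewrite inE aA /=; apply/existsP; exists b; by rewrite h se.
by rewrite -(closed_connect cl cxy).
Qed.

Lemma nb_cut (T : finType) (e : rel T) (A : {set T}) (x z : T) :
  symmetric e -> x \in A -> z \notin A -> z \notin nb e A -> is_cut e (nb e A).
Proof.
move=> se xA zA zN; exists x, z; split => //.
  by rewrite inE xA.
apply/negP => c.
have : z \in Side e (nb e A) x by rewrite inE zN c.
by move/(subsetP (side_nb_sub se xA)); rewrite (negbTE zA).
Qed.

Lemma side_notin (T : finType) (e : rel T) (U : {set T}) (x y : T) :
  y \in Side e U x -> y \notin U.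
Proof. by rewrite inE => /andP[]. Qed.

Lemma side_other (T : finType) (e : rel T) (U : {set T}) (x : T) :
  symmetric e -> is_cut e U -> x \notin U ->
  exists z, z \notin U /\ z \notin Side e U x.
Proof.
move=> se [a [b [aU bU nab]]] xU.
have cs : connect_sym (del_rel e U) by apply: sym_connect_sym; apply: del_sym.
case Ha: (a \in Side e U x); last by exists a; rewrite Ha.
case Hb: (b \in Side e U x); last by exists b; rewrite Hb.
move: Ha Hb; rewrite !inE => /andP[_ ca] /andP[_ cb].
by move: nab; rewrite (connect_trans _ cb) // cs.
Qed.

Lemma cardU_le (T : finType) (A B : {set T}) : #|A :|: B| <= #|A| + #|B|.
Proof. by rewrite cardsU leq_subr. Qed.

Lemma arith1 (k xq xr xw wp wpb na nb : nat) :
  k = xq + xr + xw -> k = wp + wpb + xw -> na <= xr + xw + wp ->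
  nb <= wpb + xq + xw -> k <= nb -> na <= k.
Proof. lia. Qed.

Lemma arith2 (k q p pq xq xr xw wp na : nat) :
  k = xq + xr + xw -> na <= xr + xw + wp -> q <= pq + xq ->
  pq + (wp + 1) <= p -> p < q -> k <= na -> False.
Proof. lia. Qed.

Theorem lemma10 (T : finType) (e : rel T) (kappa : nat)
  (u v : T) (Yu Yv W : {set T}) :
  simple_graph e -> connected_graph e -> non_complete e ->
  is_connectivity e kappa ->
  4 * kappa < #|T| ->
  let t := uphalf (#|T| - kappa) in
  is_Small e kappa t u Yu ->
  is_Small e kappa t v Yv ->
  u \in Side e Yv v ->
  kcut e kappa W -> u \notin W ->
  kappa <= #|Side e Yv v| -> #|Side e Yv v| < #|Side e W u| ->
  #|Side e W u| <= t ->
  v \in W :|: Side e W u.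
Proof.
move=> [se _] _ _ [_ kmin] _ t _ [[Xcut Xk] vX Pt Pmin] uP [Wcut Wk] uW _ PQ Qt.
set X := Yv in Xcut Xk vX Pt Pmin uP PQ *.
set P := Side e X v in Pt Pmin uP PQ *.
set Q := Side e W u in PQ Qt *.
rewrite inE; apply/negPn/negP; rewrite negb_or => /andP[vW vQ].
have vP : v \in P by rewrite inE vX connect0.
have uQ : u \in Q by rewrite inE uW connect0.
set A := [set y in P | (y \notin W) && (y \notin Q)].
set B := [set y | [&& y \notin X, y \notin P & y \in Q]].
set XQ := (X :\: W) :&: Q.
set XR := (X :\: W) :\: Q.
set XW := X :&: W.
set WP := (W :\: X) :&: P.
set WPb := (W :\: X) :\: P.
have PX : forall y, y \in P -> y \notin X by move=> y /side_notin.
have QW : forall y, y \in Q -> y \notin W by move=> y /side_notin.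
have seQ : forall a b, e a b -> a \notin W -> b \notin W -> (a \in Q) = (b \in Q).
  by move=> a b eab aW bW; rewrite /Q; apply: side_edge.
have seP : forall a b, e a b -> a \notin X -> b \notin X -> (a \in P) = (b \in P).
  by move=> a b eab aX bX; rewrite /P; apply: side_edge.
have inA : forall y, (y \in A) = [&& y \in P, y \notin W & y \notin Q].
  by move=> y; rewrite !inE.
have inB : forall y, (y \in B) = [&& y \notin X, y \notin P & y \in Q].
  by move=> y; rewrite !inE.
have vA : v \in A by rewrite inA vP vW vQ.
have NA : nb e A \subset XR :|: XW :|: WP.
  apply/subsetP => y; rewrite inE => /andP[yA /existsP[x /andP[xA exy]]].
  move: xA; rewrite inA => /and3P[xP xW xQ].
  rewrite !in_setU !in_setI !in_setD.
  case yX: (y \in X) => /=.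
    case yW: (y \in W); rewrite /= ?andbT ?andbF ?orbT ?orbF //.
    by rewrite -(seQ _ _ exy xW) ?yW.
  have yP : y \in P by rewrite -(seP _ _ exy (PX _ xP)) ?yX.
  case yW: (y \in W); rewrite /= ?yP ?andbT ?andbF ?orbT ?orbF //.
  by move: yA; rewrite inA yP yW /= -(seQ _ _ exy xW) ?yW // (negbTE xQ).
have NB : nb e B \subset WPb :|: XQ :|: XW.
  apply/subsetP => y; rewrite inE => /andP[yB /existsP[x /andP[xB exy]]].
  move: xB; rewrite inB => /and3P[xX xP xQ].
  rewrite !in_setU !in_setI !in_setD.
  case yW: (y \in W) => /=.
    case yX: (y \in X); rewrite /= ?andbT ?andbF ?orbT ?orbF //.
    by rewrite -(seP _ _ exy xX) ?yX.
  have yQ : y \in Q by rewrite -(seQ _ _ exy (QW _ xQ)) ?yW.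
  case yX: (y \in X); rewrite /= ?yQ ?andbT ?andbF ?orbT ?orbF //.
  by move: yB; rewrite inB yQ yX /= -(seP _ _ exy xX) ?yX // (negbTE xP).
have [z [zX zP0]] := side_other se Xcut vX.
have zP : z \notin P := zP0.
have cutA : is_cut e (nb e A).
  apply: (nb_cut se vA (z := z)); first by rewrite inA (negbTE zP).
  apply/negP => /(subsetP NA); rewrite !in_setU !in_setI !in_setD (negbTE zX) (negbTE zP) /=.
  by rewrite !andbF.
have geA := kmin _ cutA.
have cX : #|X| = #|XQ| + #|XR| + #|XW|.
  have h1 := cardsID W X; have h2 := cardsID Q (X :\: W).
  by rewrite -h1 -h2 addnC.
have cW : #|W| = #|WP| + #|WPb| + #|XW|.
  have h1 := cardsID X W; have h2 := cardsID P (W :\: X).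
  by rewrite /XW setIC -h1 -h2 addnC.
have cNA : #|nb e A| <= #|XR| + #|XW| + #|WP|.
  apply: leq_trans (subset_leq_card NA) _.
  by apply: leq_trans (cardU_le _ _) _; rewrite leq_add2r cardU_le.
have cNB : #|nb e B| <= #|WPb| + #|XQ| + #|XW|.
  apply: leq_trans (subset_leq_card NB) _.
  by apply: leq_trans (cardU_le _ _) _; rewrite leq_add2r cardU_le.
have leA : #|nb e A| <= kappa.
  case: (set_0Vmem B) => [B0 | [b bB]].
    exfalso.
    have sQ : Q \subset (P :&: Q) :|: XQ.
      apply/subsetP => y yQ; rewrite in_setU in_setI yQ andbT.
      case yP: (y \in P) => //=.
      case yX: (y \in X).
        by rewrite in_setI in_setD yX (QW _ yQ) yQ.
      have : y \in B by rewrite inB yX yP yQ.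
      by rewrite B0 inE.
    have sP : v |: WP \subset P :\: Q.
      apply/subsetP => y; rewrite in_setU1 => /orP[/eqP-> | ].
        by rewrite in_setD vP vQ.
      rewrite in_setI in_setD => /andP[/andP[yX yW] yP].
      by rewrite in_setD yP andbT; apply/negP => /QW; rewrite yW.
    have c1 := cardsID Q P.
    have c2 := subset_leq_card sP.
    rewrite cardsU1 in_setI in_setD (negbTE vW) /= andbF /= in c2.
    have c3 := leq_trans (subset_leq_card sQ) (cardU_le _ _).
    apply: (arith2 (etrans (esym Xk) cX) cNA c3 _ PQ geA).
    by rewrite -c1 leq_add2l addnC.
  have cutB : is_cut e (nb e B).
    apply: (nb_cut se bB (z := v)); first by rewrite inB vP /= andbF.
    apply/negP => /(subsetP NB); rewrite !in_setU !in_setI !in_setD vP (negbTE vX) /=.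
    by rewrite !andbF.
  have geB := kmin _ cutB.
  exact: (arith1 (etrans (esym Xk) cX) (etrans (esym Wk) cW) cNA cNB geB).
have kA : kcut e kappa (nb e A) by split => //; apply/eqP; rewrite eqn_leq leA geA.
have vNA : v \notin nb e A by rewrite inE vA.
have AP : A \subset P by apply/subsetP => y; rewrite inA => /andP[].
have sub := side_nb_sub se vA.
have := Pmin _ kA vNA.
have szt : #|Side e (nb e A) v| <= t.
  by apply: leq_trans (subset_leq_card sub) (leq_trans (subset_leq_card AP) Pt).
move=> /(_ szt) /subsetP /(_ u uP) /(subsetP sub).
by rewrite inA uQ !andbF.
Qed.
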